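(* Let $k$ and $m$ be positive integers. Then \[ E^{(k)}_{2m}\!\left(\tfrac12,\ldots,\tfrac12,\tfrac{k+1}{2}\right)=\sum_{i=0}^{\lfloor k/2\rfloor}\binom{k}{2i}\sum_{j=0}^i\binom{i}{j}(-1)^j E^{(2j)}_{2m}\!\left(\tfrac12,\ldots,\tfrac12\right), \] and \[ E^{(k)}_{2m+1}\!\left(\tfrac12,\ldots,\tfrac12,\tfrac{k+1}{2}\right)=\sum_{i=0}^{\lfloor k/2\rfloor}\binom{k}{2i+1}\sum_{j=0}^i\binom{i}{j}(-1)^{j} E^{(2j+1)}_{2m+1}\!\left(\tfrac12,\ldots,\tfrac12,1\right). \] Here on the left there are $k-1$ arguments equal to $\tfrac12$ followed by $\tfrac{k+1}{2}$; $E^{(2j)}_{2m}(\tfrac12,\ldots,\tfrac12)$ has all $2j$ arguments equal to $\tfrac12$; and $E^{(2j+1)}_{2m+1}(\tfrac12,\ldots,\tfrac12,1)$ has $2j$ arguments equal to $\tfrac12$ followed by $1$.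
   Context: The Euler polynomials $E_n(x)$ are defined by $\sum_{n\ge0}E_n(x)\frac{t^n}{n!}=\frac{2e^{xt}}{e^t+1}$. For $r\ge 0$ and $m\ge 0$, $E^{(r)}_m(x_1,\ldots,x_r)=\sum_{i_1+\cdots+i_r=m}\binom{m}{i_1,\ldots,i_r}E_{i_1}(x_1)\cdots E_{i_r}(x_r)$, the sum over nonnegative integers $i_1,\dots,i_r$; for $r=0$ this is the empty-product convention $E^{(0)}_m=1$ if $m=0$ and $0$ otherwise. *)

(* Defs.v *)
From mathcomp Require Import all_boot all_order all_algebra.
Set Implicit Arguments. Unset Strict Implicit. Unset Printing Implicit Defensive.
Import Order.TTheory GRing.Theory Num.Theory.
Local Open Scope ring_scope.

(* The generating function
   identity  (e^t + 1) * sum_n E_n(x) t^n/n! = 2 e^{xt}  is, coefficientwise,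
   sum_{k<=n} C(n,k) E_k(x) + E_n(x) = 2 x^n, i.e.
   E_n(x) = x^n - 1/2 * sum_{k<n} C(n,k) E_k(x).
   euler_seq n x = [:: E_0(x); ...; E_n(x)]. *)
Fixpoint euler_seq (n : nat) (x : rat) : seq rat :=
  match n with
  | 0 => [:: 1]
  | n'.+1 =>
      let s := euler_seq n' x in
      rcons s (x ^+ n'.+1 - 2^-1 * \sum_(k < n'.+1) ('C(n'.+1, k))%:R * nth 0 s k)
  end.

Definition euler (n : nat) (x : rat) : rat := nth 0 (euler_seq n x) n.

Definition eulerM (r m : nat) (x : 'I_r -> rat) : rat :=
  \sum_(i : {ffun 'I_r -> 'I_m.+1} | (\sum_(l < r) (i l : nat))%N == m)
    ((m`!)%:R / (\prod_(l < r) ((i l : nat)`!)%:R)) *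
    \prod_(l < r) euler (i l) (x l).

(* Main.v *)
Require Import Defs.
From mathcomp Require Import all_boot all_order all_algebra.
From mathcomp Require Import ring zify.
Import Order.TTheory GRing.Theory Num.Theory.
Local Open Scope ring_scope.

Lemma size_euler_seq n x : size (euler_seq n x) = n.+1.
Proof. by elim: n => [|n IH] //=; rewrite size_rcons IH. Qed.

Lemma nth_euler_seq n x k : (k <= n)%N -> nth 0 (euler_seq n x) k = euler k x.
Proof.
elim: n k => [|n IH] k.
  by rewrite leqn0 => /eqP ->.
rewrite leq_eqVlt => /orP [/eqP -> //| hk].
rewrite /= nth_rcons size_euler_seq hk; exact: IH.
Qed.

Lemma euler_rec n x :
  \sum_(k < n.+1) ('C(n, k))%:R * euler k x + euler n x = 2 * x ^+ n.
Proof.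
case: n => [|n].
  by rewrite big_ord1 /euler /= bin0 mul1r expr0 mulr1.
rewrite big_ord_recr /= binn mul1r.
have -> : euler n.+1 x = x ^+ n.+1 - 2^-1 *
   \sum_(k < n.+1) ('C(n.+1, k))%:R * euler k x.
  rewrite {1}/euler /= nth_rcons size_euler_seq ltnn eqxx.
  congr (_ - _ * _); apply: eq_bigr => i _.
  by rewrite nth_euler_seq // -ltnS.
set S := \sum_(_ < _) _.
set e := x ^+ n.+1 - _.
by rewrite /e; field.
Qed.

Set Implicit Arguments. Unset Strict Implicit.

Definition T (N : nat) (p : {poly rat}) := take_poly N p.
Definition egf (N : nat) (f : nat -> rat) : {poly rat} :=
  \poly_(j < N) (f j / (j`!)%:R).

Lemma TMl N p q : T N (T N p * q) = T N (p * q).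
Proof.
rewrite /T -{2}[p](poly_take_drop N) mulrDl mulrAC take_polyD.
by rewrite take_polyMXn_0 addr0.
Qed.

Lemma TMr N p q : T N (p * T N q) = T N (p * q).
Proof. by rewrite mulrC TMl mulrC. Qed.

Lemma TM2 N p p' q q' : T N p = T N p' -> T N q = T N q' ->
  T N (p * q) = T N (p' * q').
Proof. by move=> hp hq; rewrite -TMl hp TMl -TMr hq TMr. Qed.

Lemma TX N p q n : T N p = T N q -> T N (p ^+ n) = T N (q ^+ n).
Proof.
move=> h; elim: n => [|n IH]; first by rewrite !expr0.
by rewrite !exprS; apply: TM2.
Qed.

Lemma TD N p q : T N (p + q) = T N p + T N q.
Proof. exact: take_polyD. Qed.

Lemma TB N p q : T N (p - q) = T N p - T N q.
Proof. by rewrite /T linearB. Qed.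

Lemma TZ N c p : T N (c *: p) = c *: T N p.
Proof. exact: take_polyZ. Qed.

Lemma Tsum N I (r : seq I) (P : pred I) (F : I -> {poly rat}) :
  T N (\sum_(i <- r | P i) F i) = \sum_(i <- r | P i) T N (F i).
Proof. exact: take_poly_sum. Qed.

Lemma coefT N p n : (T N p)`_n = if (n < N)%N then p`_n else 0.
Proof. exact: coef_take_poly. Qed.

Lemma TT N p : T N (T N p) = T N p.
Proof. by apply/polyP => n; rewrite !coefT; case: (n < N)%N. Qed.

Lemma coef_egf N f n : (egf N f)`_n = if (n < N)%N then f n / (n`!)%:R else 0.
Proof. exact: coef_poly. Qed.

Lemma Tegf N f : T N (egf N f) = egf N f.
Proof. by rewrite /T take_poly_id // size_poly. Qed.

Lemma fact_neq0 n : (n`!)%:R != 0 :> rat.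
Proof. by rewrite pnatr_eq0 -lt0n fact_gt0. Qed.

Lemma egfM N f g n : (n < N)%N ->
  (egf N f * egf N g)`_n =
  (\sum_(i < n.+1) ('C(n, i))%:R * f i * g (n - i)%N) / (n`!)%:R.
Proof.
move=> hn; rewrite coefM mulr_suml; apply: eq_bigr => i _.
have hi : (i <= n)%N by rewrite -ltnS.
rewrite !coef_egf (leq_ltn_trans hi hn) (leq_ltn_trans (leq_subr i n) hn).
rewrite -(bin_fact hi) !natrM.
have h1 := fact_neq0 i; have h2 := fact_neq0 (n - i).
have h3 : ('C(n, i))%:R != 0 :> rat by rewrite pnatr_eq0 -lt0n bin_gt0.
by field; rewrite h1 h2 h3.
Qed.

Definition ex (x : rat) := fun n : nat => x ^+ n.

Lemma ex_mul N x y : T N (egf N (ex x) * egf N (ex y)) = egf N (ex (x + y)).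
Proof.
apply/polyP => n; rewrite coefT coef_egf; case: ltnP => hn //.
rewrite egfM //; congr (_ / _); rewrite /ex addrC exprDn.
apply: eq_bigr => i _; rewrite -mulr_natl; ring.
Qed.

Lemma ex0 N : egf N (ex 0) = T N 1.
Proof.
apply/polyP => n; rewrite coefT coef_egf coef1; case: ltnP => hn //.
by case: n hn => [|n] _; rewrite /ex ?expr0 ?divr1 // expr0n mul0r.
Qed.

Definition Eu N x := egf N (fun n => euler n x).

Lemma egf_euler N x :
  T N ((egf N (ex 1) + 1) * Eu N x) = 2%:P * egf N (ex x).
Proof.
apply/polyP => n; rewrite coefT coefCM coef_egf; case: ltnP => hn; last by rewrite mulr0.
rewrite mulrDl mul1r coefD mulrC egfM // /Eu coef_egf hn.
under eq_bigr => i _ do rewrite /ex expr1n mulr1.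
by rewrite -mulrDl euler_rec mulrA.
Qed.

Definition par N (s : bool) (p : {poly rat}) :=
  forall n, (n < N)%N -> odd n != s -> p`_n = 0.

Lemma parT N s p q : T N p = T N q -> par N s p -> par N s q.
Proof.
move=> h hp n hn hs; have := congr1 (fun r : {poly rat} => r`_n) h.
by rewrite /= !coefT hn => <-; apply: hp.
Qed.

Lemma parM N s t p q : par N s p -> par N t q -> par N (s (+) t) (p * q).
Proof.
move=> hp hq n hn hs; rewrite coefM big1 // => i _.
have hi : (i <= n)%N by rewrite -ltnS.
have hiN : (i < N)%N by apply: leq_ltn_trans hn.
have hniN : (n - i < N)%N by apply: leq_ltn_trans (leq_subr i n) hn.
case: (boolP (odd i == s)) => his.
  rewrite (hq (n - i)%N) ?mulr0 //.
  move: hs his; rewrite oddB //; clear hp hq; case: (odd n); case: (odd i); case: s; case: t => //.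
by rewrite hp ?mul0r.
Qed.

Lemma parD N s p q : par N s p -> par N s q -> par N s (p + q).
Proof. by move=> hp hq n hn hs; rewrite coefD hp ?hq ?addr0. Qed.

Lemma parN N s p : par N s p -> par N s (- p).
Proof. by move=> hp n hn hs; rewrite coefN hp ?oppr0. Qed.

Lemma parB N s p q : par N s p -> par N s q -> par N s (p - q).
Proof. by move=> hp hq; apply: parD => //; apply: parN. Qed.

Lemma parZ N s c p : par N s p -> par N s (c *: p).
Proof. by move=> hp n hn hs; rewrite coefZ hp ?mulr0. Qed.

Lemma par0 N s : par N s 0.
Proof. by move=> n _ _; rewrite coef0. Qed.

Lemma par_sum N s I (r : seq I) (P : pred I) (F : I -> {poly rat}) :
  (forall i, P i -> par N s (F i)) -> par N s (\sum_(i <- r | P i) F i).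
Proof.
move=> h; elim/big_rec: _ => [|i x Pi hx]; first exact: par0.
by apply: parD => //; apply: h.
Qed.

Lemma parC N c : par N false c%:P.
Proof. by move=> [|n] // _ _; rewrite coefC. Qed.

Lemma parX N s p i : par N s p -> par N (s && odd i) (p ^+ i).
Proof.
move=> hp; elim: i => [|i IH].
  by rewrite andbF expr0 -polyC1; apply: parC.
rewrite exprS; have := parM hp IH.
by case: s {hp IH}.
Qed.

Lemma par_cancel N s c q : par N false c -> c`_0 != 0 -> par N s (c * q) ->
  par N s q.
Proof.
move=> hc c0 hcq n; elim/ltn_ind: n => n IH hn hs.
have := hcq n hn hs; rewrite coefM big_ord_recl subn0 /=.
rewrite big1 ?addr0; first by move/eqP; rewrite mulf_eq0 (negbTE c0) => /eqP.
move=> i _; rewrite /bump /= add1n.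
have hi : (i < n)%N := ltn_ord i.
case: (boolP (odd i.+1)) => ho.
  by rewrite (hc i.+1 (leq_ltn_trans hi hn)) ?ho ?mul0r.
rewrite (IH (n - i.+1)%N) ?mulr0 //.
- by rewrite subnSK // leq_subr.
- exact: leq_ltn_trans (leq_subr _ _) hn.
by rewrite oddB // (negbTE ho) addbF.
Qed.

Lemma prod_scaleX (I : finType) (c : I -> rat) (e : I -> nat) :
  \prod_i (c i *: 'X^(e i)) = (\prod_i c i) *: ('X^(\sum_i e i) : {poly rat}).
Proof.
under eq_bigr do rewrite -mul_polyC.
by rewrite big_split /= -rmorph_prod prodrXr mul_polyC.
Qed.

Lemma eulerM_coef r M (x : 'I_r -> rat) :
  eulerM M x = (M`!)%:R * (\prod_(l < r) Eu M.+1 (x l))`_M.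
Proof.
have E1 l : Eu M.+1 (x l) =
    \sum_(j < M.+1) (euler j (x l) / (j`!)%:R) *: 'X^j.
  by rewrite /Eu /egf poly_def.
rewrite (eq_bigr _ (fun l _ => E1 l)) bigA_distr_bigA /= coef_sum.
rewrite /eulerM big_mkcond /= mulr_sumr; apply: eq_bigr => f _.
rewrite prod_scaleX coefZ coefXn prodf_div eq_sym.
case: eqP => _; last by rewrite !mulr0 ?if_same.
rewrite /=; ring.
Qed.

Notation h := (2^-1 : rat).
Definition aa N := egf N (ex h).
Definition bb N := egf N (ex (- h)).
Definition AA N := aa N + bb N.
Definition BB N := aa N - bb N.

Lemma Tab N : T N (aa N * bb N) = T N 1.
Proof. by rewrite /aa /bb ex_mul subrr ex0. Qed.

Lemma Tbegf N y : T N (bb N * egf N (ex y)) = egf N (ex (y - h)).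
Proof. by rewrite /bb ex_mul addrC. Qed.

Lemma TbP N : T N (bb N * (egf N (ex 1) + 1)) = T N (AA N).
Proof.
rewrite mulrDr mulr1 TD Tbegf /AA TD /aa Tegf.
by have -> : 1 - h = h by field.
Qed.

Lemma TAE N x : T N (AA N * Eu N x) = T N (2%:P * egf N (ex (x - h))).
Proof.
rewrite -TMl -TbP TMl -mulrA -TMr egf_euler mulrCA.
by rewrite -[LHS]TMr Tbegf.
Qed.

Lemma Ta_pow N k : T N (aa N ^+ k) = egf N (ex (k%:R * h)).
Proof.
elim: k => [|k IH]; first by rewrite expr0 mul0r ex0.
rewrite exprS -TMr IH /aa ex_mul; congr (egf N (ex _)).
by rewrite mulrS; ring.
Qed.

Lemma TAu N : T N (AA N * Eu N h) = T N 2%:P.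
Proof. by rewrite TAE subrr ex0 TMr mulr1. Qed.

Lemma TAv N : T N (AA N * Eu N 1) = T N (AA N + BB N).
Proof.
rewrite TAE; have -> : 1 - h = h by field.
by rewrite polyC_natr /AA /BB /aa; congr (T N _); ring.
Qed.

Lemma TAw N k : T N (AA N * Eu N ((k%:R + 1) / 2)) = T N (2%:P * aa N ^+ k).
Proof.
rewrite TAE -[RHS]TMr Ta_pow; congr (T N (_ * egf N (ex _))).
by field.
Qed.

Lemma TG4 N : T N (AA N ^+ 2 * (1 - Eu N h ^+ 2)) = T N (BB N ^+ 2).
Proof.
have e1 : AA N ^+ 2 * (1 - Eu N h ^+ 2) = AA N ^+ 2 - (AA N * Eu N h) ^+ 2.
  by ring.
have e2 : BB N ^+ 2 = AA N ^+ 2 - 4 * (aa N * bb N).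
  by rewrite /AA /BB; ring.
rewrite e1 e2 !TB; congr (_ - _).
rewrite (TX 2 (TAu N)) (TM2 (erefl (T N 4)) (Tab N)).
by rewrite polyC_natr; congr (T N _); ring.
Qed.

Lemma parAA N : par N false (AA N).
Proof.
move=> n hn ho; have {}ho : odd n = true by case: (odd n) ho.
rewrite /AA /aa /bb coefD !coef_egf hn /ex.
by rewrite exprNn -signr_odd ho expr1 mulN1r -mulrDl addrN mul0r.
Qed.

Lemma parBB N : par N true (BB N).
Proof.
move=> n hn ho; have {}ho : odd n = false by case: (odd n) ho.
rewrite /BB /aa /bb coefB !coef_egf hn /ex.
by rewrite exprNn -signr_odd ho expr0 mul1r -mulrBl subrr mul0r.
Qed.

Lemma coef0X (p : {poly rat}) k : (p ^+ k)`_0 = p`_0 ^+ k.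
Proof.
elim: k => [|k IH]; first by rewrite !expr0 coef1.
by rewrite !exprS coef0M IH.
Qed.

Lemma AA0 N : (0 < N)%N -> (AA N ^+ 2)`_0 != 0 -> True.
Proof. by []. Qed.

Lemma AAk0 N k : (0 < N)%N -> (AA N ^+ k)`_0 != 0.
Proof.
move=> hN; rewrite coef0X /AA /aa /bb coefD !coef_egf hN /ex !expr0.
by rewrite expf_neq0 // divr1.
Qed.

Lemma sum_split (F : nat -> {poly rat}) k :
  (forall i, (k < i)%N -> F i = 0) ->
  \sum_(i < k.+1) F i = \sum_(0 <= i < k./2.+1) (F (2 * i)%N + F (2 * i).+1).
Proof.
move=> hF.
have hpair n : \sum_(0 <= i < 2 * n) F i =
    \sum_(0 <= i < n) (F (2 * i)%N + F (2 * i).+1).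
  elim: n => [|n IH]; first by rewrite muln0 !big_geq.
  by rewrite mulnSr addn2 !big_nat_recr //= IH addrA.
have -> : \sum_(i < k.+1) F i = \sum_(0 <= i < k.+1) F i by rewrite big_mkord.
rewrite -hpair [RHS](big_cat_nat _ (n := k.+1)) //=; last by lia.
rewrite [X in _ + X]big_nat_cond [X in _ + X]big1 ?addr0 //.
move=> i /andP [/andP [hi _] _]; exact: hF.
Qed.

Definition ff N k i := ('C(k, i))%:R * (AA N ^+ (k - i) * BB N ^+ i).

Lemma expand N k : (AA N + BB N) ^+ k =
  \sum_(0 <= i < k./2.+1) ff N k (2 * i) + \sum_(0 <= i < k./2.+1) ff N k (2 * i).+1.
Proof.
rewrite exprDn -big_split /=.
under eq_bigr => i _ do rewrite -mulr_natl -/(ff N k i).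
by rewrite (@sum_split (fun i => ff N k i) k) // => i hi; rewrite /ff bin_small // mul0r.
Qed.

Lemma par_ff N k i : par N (odd i) (ff N k i).
Proof.
rewrite /ff -polyC_natr.
exact: (parM (parC _) (parM (parX (i:=k-i) (@parAA N)) (parX (i:=i) (@parBB N)))).
Qed.

Lemma inner_eq (p : {poly rat}) i :
  \sum_(0 <= j < i.+1) ('C(i, j))%:R * (-1) ^+ j * p ^+ (2 * j) = (1 - p ^+ 2) ^+ i.
Proof.
rewrite exprBn big_mkord; apply: eq_bigr => j _.
by rewrite expr1n mulr1 -mulr_natl exprM; ring.
Qed.

Definition Lp N k := \prod_(l < k)
  Eu N (if (val l == k.-1)%N then (k%:R + 1) / 2 else 2^-1).

Lemma Lp_eq N k : Lp N k.+1 = Eu N h ^+ k * Eu N ((k.+1%:R + 1) / 2).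
Proof.
rewrite /Lp big_ord_recr /= eqxx; congr (_ * _).
rewrite -[in RHS](card_ord k) -prodr_const; apply: eq_bigr => i _.
by rewrite (ltn_eqF (ltn_ord i)).
Qed.

Definition R1p N k := \sum_(0 <= i < k./2.+1) ('C(k, 2 * i))%:R *
  \sum_(0 <= j < i.+1) ('C(i, j))%:R * (-1) ^+ j * Eu N h ^+ (2 * j).

Definition R2p N k := \sum_(0 <= i < k./2.+1) ('C(k, (2 * i).+1))%:R *
  \sum_(0 <= j < i.+1) ('C(i, j))%:R * (-1) ^+ j * (Eu N h ^+ (2 * j) * Eu N 1).

Definition gg N k i :=
  ('C(k, (2 * i).+1))%:R * (AA N ^+ (k - 2 * i) * BB N ^+ (2 * i)).

Lemma TAk_Lp N k : (0 < k)%N -> T N (AA N ^+ k * Lp N k) = T N ((AA N + BB N) ^+ k).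
Proof.
case: k => // k _; rewrite Lp_eq.
have -> : AA N ^+ k.+1 * (Eu N h ^+ k * Eu N ((k.+1%:R + 1) / 2)) =
    (AA N * Eu N h) ^+ k * (AA N * Eu N ((k.+1%:R + 1) / 2)).
  by rewrite exprS exprMn; ring.
rewrite (TM2 (TX k (TAu N)) (TAw N k.+1)); congr (T N _).
have -> : AA N + BB N = 2 * aa N by rewrite /AA /BB; ring.
by rewrite polyC_natr exprMn !exprS; ring.
Qed.

Lemma TAk_R1p N k :
  T N (AA N ^+ k * R1p N k) = T N (\sum_(0 <= i < k./2.+1) ff N k (2 * i)).
Proof.
rewrite /R1p mulr_sumr !Tsum; apply: eq_big_nat => i /andP [_ hi].
rewrite inner_eq mulrCA.
have hk : (2 * i <= k)%N by lia.
have -> : AA N ^+ k * (1 - Eu N h ^+ 2) ^+ i =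
    AA N ^+ (k - 2 * i) * (AA N ^+ 2 * (1 - Eu N h ^+ 2)) ^+ i.
  by rewrite exprMn -exprM mulrA -exprD subnK.
rewrite /ff exprM.
exact: (TM2 (erefl _) (TM2 (erefl _) (TX i (TG4 N)))).
Qed.

Lemma part1 N k : (0 < N)%N -> (0 < k)%N -> par N true (Lp N k - R1p N k).
Proof.
move=> hN hk.
apply: (par_cancel (c := AA N ^+ k)).
- exact: (parX (i:=k) (@parAA N)).
- exact: AAk0.
apply: (parT (p := \sum_(0 <= i < k./2.+1) ff N k (2 * i).+1)).
  by rewrite mulrBr TB TAk_Lp // TAk_R1p expand TD; ring.
apply: par_sum => i _; have := @par_ff N k (2 * i).+1.
by rewrite /= oddM.
Qed.

Lemma TAk_R2p N k :
  T N (AA N ^+ k * R2p N k) = T N (\sum_(0 <= i < k./2.+1) gg N k i +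
    \sum_(0 <= i < k./2.+1) ff N k (2 * i).+1).
Proof.
rewrite /R2p mulr_sumr -big_split /= !Tsum; apply: eq_big_nat => i /andP [_ hi].
under eq_bigr do rewrite mulrA.
rewrite -mulr_suml inner_eq.
case: (ltnP k (2 * i).+1) => hk.
  by rewrite /gg /ff bin_small // !mul0r mulr0 addr0.
set d := (k - (2 * i).+1)%N.
have e1 : AA N ^+ k = AA N ^+ d * AA N ^+ (2 * i) * AA N.
  by rewrite -exprD -exprSr; congr (_ ^+ _); rewrite /d; lia.
have e2 : (k - 2 * i = d.+1)%N by rewrite /d; lia.
have -> : AA N ^+ k * (('C(k, (2 * i).+1))%:R *
     ((1 - Eu N h ^+ 2) ^+ i * Eu N 1)) =
   ('C(k, (2 * i).+1))%:R * (AA N ^+ d * (AA N ^+ 2 * (1 - Eu N h ^+ 2)) ^+ i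
     * (AA N * Eu N 1)).
  by rewrite e1 exprMn -exprM; ring.
rewrite (TM2 (erefl _) (TM2 (TM2 (erefl _) (TX i (TG4 N))) (TAv N))).
congr (T N _); rewrite /gg /ff e2 -/d (exprS (AA N) d) (exprS (BB N) (2 * i)) exprM.
by move: (BB N ^+ 2 ^+ i) (AA N ^+ d) => X Y; ring.
Qed.

Lemma part2 N k : (0 < N)%N -> (0 < k)%N -> par N false (Lp N k - R2p N k).
Proof.
move=> hN hk.
apply: (par_cancel (c := AA N ^+ k)).
- exact: (parX (i:=k) (@parAA N)).
- exact: AAk0.
apply: (parT (p := \sum_(0 <= i < k./2.+1) ff N k (2 * i) -
                   \sum_(0 <= i < k./2.+1) gg N k i)).
  by rewrite mulrBr !TB TAk_Lp // TAk_R2p expand !TD; ring.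
apply: parB; apply: par_sum => i _.
  by have := @par_ff N k (2 * i); rewrite oddM.
rewrite /gg -polyC_natr.
have := (parM (parC ('C(k, (2 * i).+1))%:R)
  (parM (parX (i:=k - 2 * i) (@parAA N)) (parX (i:=2 * i) (@parBB N)))).
by rewrite /= oddM.
Qed.


Lemma coefCn (n : nat) (p : {poly rat}) i : ((n%:R : {poly rat}) * p)`_i = n%:R * p`_i.
Proof. by rewrite -polyC_natr coefCM. Qed.

Lemma coefS (j : nat) (p : {poly rat}) i : (((-1) ^+ j : {poly rat}) * p)`_i = (-1) ^+ j * p`_i.
Proof. by rewrite -coefCM rmorph_sign. Qed.

Lemma prod_last N j : \prod_(l < (2 * j).+1) Eu N (if (val l == 2 * j)%N then 1 else 2^-1)
  = Eu N h ^+ (2 * j) * Eu N 1.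
Proof.
rewrite big_ord_recr /= eqxx; congr (_ * _).
rewrite -[in RHS](card_ord (2 * j)) -prodr_const; apply: eq_bigr => i _.
by rewrite (ltn_eqF (ltn_ord i)).
Qed.

Theorem mainTheorem5 (k m : nat) (hk : (0 < k)%N) (hm : (0 < m)%N) :
  eulerM (2 * m)
    (fun l : 'I_k => if (val l == k.-1)%N then (k%:R + 1) / 2 else 2^-1)
  = \sum_(0 <= i < (k./2).+1)
      ('C(k, 2 * i))%:R *
      \sum_(0 <= j < i.+1)
        ('C(i, j))%:R * (-1) ^+ j * eulerM (2 * m) (fun _ : 'I_(2 * j) => 2^-1)
  /\
  eulerM (2 * m).+1
    (fun l : 'I_k => if (val l == k.-1)%N then (k%:R + 1) / 2 else 2^-1)
  = \sum_(0 <= i < (k./2).+1)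
      ('C(k, (2 * i).+1))%:R *
      \sum_(0 <= j < i.+1)
        ('C(i, j))%:R * (-1) ^+ j *
        eulerM (2 * m).+1
          (fun l : 'I_(2 * j).+1 => if (val l == 2 * j)%N then 1 else 2^-1).
Proof.
split.
- set M := (2 * m)%N.
  have key : (Lp M.+1 k)`_M = (R1p M.+1 k)`_M.
    apply/eqP; rewrite -subr_eq0 -coefB; apply/eqP.
    by apply: (part1 (N:=M.+1)) => //; rewrite /M oddM.
  transitivity ((M`!)%:R * (Lp M.+1 k)`_M); first by rewrite eulerM_coef.
  rewrite key /R1p coef_sum mulr_sumr; apply: eq_bigr => i _.
  rewrite coefCn mulrCA; congr (_ * _).
  rewrite coef_sum mulr_sumr; apply: eq_bigr => j _.
  rewrite eulerM_coef /= prodr_const card_ord -mulrA coefCn coefS; ring.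
- set M := (2 * m).+1.
  have key : (Lp M.+1 k)`_M = (R2p M.+1 k)`_M.
    apply/eqP; rewrite -subr_eq0 -coefB; apply/eqP.
    by apply: (part2 (N:=M.+1)) => //; rewrite /M /= oddM.
  transitivity ((M`!)%:R * (Lp M.+1 k)`_M); first by rewrite eulerM_coef.
  rewrite key /R2p coef_sum mulr_sumr; apply: eq_bigr => i _.
  rewrite coefCn mulrCA; congr (_ * _).
  rewrite coef_sum mulr_sumr; apply: eq_bigr => j _.
  rewrite eulerM_coef prod_last -mulrA coefCn coefS; ring.
Qed.
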